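(* Assume: (i) there is $L_f>0$ with $\|f(w,t)-f(y,t)\|_2\le L_f\|w-y\|_2$ for all $w,y\in\mathbb{R}^{N_s}$, $t\in[0,T]$; (ii) $\Delta t<\sigma_{\min}(A_{LM})/(L_f\sigma_{\max}(B_{LM}))$; (iii) there is $P>0$ with $\|\bar A\,\bar r(w)\|_2\ge P\|\bar r(w)\|_2$ for all $w\in\mathcal{S}$. Let $x\in\mathbb{R}^{N_sN_t}$ satisfy $\bar r(x)=0$ (the full-order solution) and let $\tilde x\in\arg\min_{w\in\mathcal{S}}\|\bar A\,\bar r(w)\|_2$ (the ST-LSPG solution). Then $$\|x-\tilde x\|_2\le\frac1P\,\frac{\sigma_{\max}(\bar A A_{LM})+\Delta t L_f\sigma_{\max}(\bar A B_{LM})}{\sigma_{\min}(A_{LM})-\Delta t L_f\sigma_{\max}(B_{LM})}\,\min_{w\in\mathcal{S}}\|x-w\|_2.$$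
   Context: Let $f:\mathbb{R}^{N_s}\times[0,T]\to\mathbb{R}^{N_s}$ be the velocity of the ODE $\dot x=f(x,t)$, $x(0)=x^0\in\mathbb{R}^{N_s}$. Use a uniform time grid $t^n=n\Delta t$, $n=0,\dots,N_t$, $\Delta t=T/N_t$. A linear multistep scheme is given by integers $k(n)\le n$ and coefficients $\alpha_j^n,\beta_j^n\in\mathbb{R}$, $j=0,\dots,k(n)$, $n=1,\dots,N_t$, with $\alpha_0^n\neq0$. For $w=(w^1,\dots,w^{N_t})\in\mathbb{R}^{N_sN_t}$ (blocks $w^n\in\mathbb{R}^{N_s}$) set $w^0:=x^0$ and define the residual at step $n$ by $r^n(w)=\sum_{j=0}^{k(n)}\alpha_j^n w^{n-j}-\Delta t\sum_{j=0}^{k(n)}\beta_j^n f(w^{n-j},t^{n-j})$, and the space–time residual $\bar r(w)=(r^1(w),\dots,r^{N_t}(w))\in\mathbb{R}^{N_sN_t}$. Let $A_{LM},B_{LM}\in\mathbb{R}^{N_sN_t\times N_sN_t}$ be the block lower-triangular matrices (blocks of size $N_s\times N_s$) whose $(n,n-j)$ block is $\alpha_j^n I_{N_s}$, resp. $\beta_j^n I_{N_s}$, for $0\le j\le k(n)$ with $n-j\ge1$, and zero otherwise. $\sigma_{\max}(M)$, $\sigma_{\min}(M)$ denote the largest and smallest singular values of $M$; $\|\cdot\|_2$ is the Euclidean norm on $\mathbb{R}^{N_sN_t}$. The space–time trial subspace is the affine subspace $\mathcal{S}=\{(x^0,\dots,x^0)+\sum_{i=1}^{n_{st}}c_i\pi_i: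 c\in\mathbb{R}^{n_{st}}\}\subseteq\mathbb{R}^{N_sN_t}$ for given vectors $\pi_1,\dots,\pi_{n_{st}}\in\mathbb{R}^{N_sN_t}$; $\bar A\in\mathbb{R}^{\bar z\times N_sN_t}$ is a weighting matrix. *)

(* Defs.v *)
From HB Require Import structures.
From mathcomp Require Import all_boot all_order all_algebra.
Set Implicit Arguments. Unset Strict Implicit. Unset Printing Implicit Defensive.
Import Order.TTheory GRing.Theory Num.Theory.
Local Open Scope ring_scope.

Section Defs.
Variable R : rcfType.

Definition norm2 m (v : 'cV[R]_m) : R := Num.sqrt (\sum_(i < m) v i 0 ^+ 2).

(* nat-indexed access to a column vector (0 outside range) *)
Definition vget m (v : 'cV[R]_m) (i : nat) : R :=
  match (insub i : option 'I_m) with Some i' => v i' 0 | None => 0 end.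

Definition is_sigma_max m n (M : 'M[R]_(m, n)) (s : R) : Prop :=
  0 <= s /\ eigenvalue (M^T *m M) (s ^+ 2) /\
  forall l, eigenvalue (M^T *m M) l -> l <= s ^+ 2.

Definition is_sigma_min n (M : 'M[R]_n) (s : R) : Prop :=
  0 <= s /\ eigenvalue (M^T *m M) (s ^+ 2) /\
  forall l, eigenvalue (M^T *m M) l -> s ^+ 2 <= l.

Variables (Ns Nt : nat).

(* Space-time vectors live in 'cV_(Nt * Ns); block n (1 <= n <= Nt) occupies
   indices (n-1)*Ns, ..., (n-1)*Ns + Ns - 1.  Block 0 is the initial state x0. *)
Definition blk (x0 : 'cV[R]_Ns) (w : 'cV[R]_(Nt * Ns)) (n : nat) : 'cV[R]_Ns :=
  if n is n'.+1 then \col_(a < Ns) vget w (n' * Ns + a) else x0.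

(* residual at step n:  sum_j alpha_j^n w^{n-j} - dt sum_j beta_j^n f(w^{n-j}, t^{n-j}),
   with alpha n j = alpha_j^n, beta n j = beta_j^n, t^m = m * dt *)
Definition resid (f : 'cV[R]_Ns -> R -> 'cV[R]_Ns) (dt : R) (k : nat -> nat)
  (alpha beta : nat -> nat -> R) (x0 : 'cV[R]_Ns) (w : 'cV[R]_(Nt * Ns)) (n : nat)
  : 'cV[R]_Ns :=
  \sum_(j < (k n).+1)
     (alpha n j *: blk x0 w (n - j)
      - (dt * beta n j) *: f (blk x0 w (n - j)) ((n - j)%:R * dt)).

Definition rbar f dt k alpha beta x0 (w : 'cV[R]_(Nt * Ns)) : 'cV[R]_(Nt * Ns) :=
  \col_(p < Nt * Ns) vget (resid f dt k alpha beta x0 w (p %/ Ns).+1) (p %% Ns).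

(* block lower-triangular matrix whose (n, n-j) block is c n j * I_Ns for
   0 <= j <= k n, n - j >= 1; zero otherwise *)
Definition LMmat (k : nat -> nat) (c : nat -> nat -> R) : 'M[R]_(Nt * Ns) :=
  \matrix_(p < Nt * Ns, q < Nt * Ns)
    let n := (p %/ Ns).+1 in let m := (q %/ Ns).+1 in
    if [&& p %% Ns == q %% Ns, m <= n & n - m <= k n]%N then c n (n - m)%N else 0.

Definition x0rep (x0 : 'cV[R]_Ns) : 'cV[R]_(Nt * Ns) :=
  \col_(p < Nt * Ns) vget x0 (p %% Ns).

Definition inS nst (x0 : 'cV[R]_Ns) (Pi : 'M[R]_(Nt * Ns, nst)) (w : 'cV[R]_(Nt * Ns))
  : Prop := exists c : 'cV[R]_nst, w = x0rep x0 + Pi *m c.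

End Defs.

(* Main.v *)
Require Import Defs.
From HB Require Import structures.
From mathcomp Require Import all_boot all_order all_algebra.
From mathcomp Require Import complex.
From mathcomp Require Import ring lra zify.
Import Order.TTheory GRing.Theory Num.Theory Num.Def.
Set Implicit Arguments. Unset Strict Implicit.
Local Open Scope ring_scope.

Section Blocks.
Variable R : rcfType.

Lemma vget_ord m (v : 'cV[R]_m) (i : 'I_m) : vget v i = v i 0.
Proof. by rewrite /vget valK. Qed.

Lemma vget_ge m (v : 'cV[R]_m) i : (m <= i)%N -> vget v i = 0.
Proof. by move=> h; rewrite /vget insubF // ltnNge h. Qed.

Lemma vgetB m (u v : 'cV[R]_m) i : vget (u - v) i = vget u i - vget v i.
Proof.
case: (ltnP i m) => h; last by rewrite !vget_ge // subr0.
by have -> : i = nat_of_ord (Ordinal h) by []; rewrite !vget_ord !mxE.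
Qed.

Lemma vgetZ m a (u : 'cV[R]_m) i : vget (a *: u) i = a * vget u i.
Proof.
case: (ltnP i m) => h; last by rewrite !vget_ge // mulr0.
by have -> : i = nat_of_ord (Ordinal h) by []; rewrite !vget_ord mxE.
Qed.

Lemma vget_sum m I (r : seq I) (P : pred I) (F : I -> 'cV[R]_m) i :
  vget (\sum_(j <- r | P j) F j) i = \sum_(j <- r | P j) vget (F j) i.
Proof.
case: (ltnP i m) => h; last by rewrite vget_ge // big1 // => j _; rewrite vget_ge.
have -> : i = nat_of_ord (Ordinal h) by []; rewrite vget_ord summxE.
by apply: eq_bigr => j _; rewrite vget_ord.
Qed.

Lemma vget_col m (g : nat -> R) i : (i < m)%N ->
  vget (\col_(p < m) g p) i = g i.
Proof. by move=> h; have -> : i = nat_of_ord (Ordinal h) by []; rewrite vget_ord mxE. Qed.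

Lemma sum_split (F : nat -> R) (Nt Ns : nat) :
  \sum_(p < Nt * Ns) F p = \sum_(m < Nt) \sum_(b < Ns) F (m * Ns + b)%N.
Proof.
elim: Nt => [|Nt IH]; first by rewrite mul0n !big_ord0.
rewrite big_ord_recr /= -IH -!(big_mkord xpredT) mulSnr.
rewrite (big_cat_nat _ (leq_addr Ns (Nt * Ns))) //=; congr (_ + _).
by rewrite -{1}[(Nt * Ns)%N]add0n big_addn addKn big_mkord; apply: eq_bigr => i _; rewrite addnC.
Qed.

Lemma dot_vget m (u v : 'cV[R]_m) :
  \sum_(i < m) u i 0 * v i 0 = \sum_(i < m) vget u i * vget v i.
Proof. by apply: eq_bigr => i _; rewrite !vget_ord. Qed.

End Blocks.

Section B2.
Variable R : rcfType.

Lemma divmod_block Ns m b : (b < Ns)%N -> ((m * Ns + b) %/ Ns = m /\ (m * Ns + b) %% Ns = b)%N.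
Proof.
move=> hb; have Ns0 : (0 < Ns)%N by apply: leq_ltn_trans hb.
by rewrite divnMDl // modnMDl divn_small // modn_small // addn0.
Qed.

Lemma LM_vget Ns Nt k (c : nat -> nat -> R) (e : 'cV[R]_(Nt * Ns)) p :
  (p < Nt * Ns)%N ->
  vget (LMmat Ns Nt k c *m e) p =
  \sum_(j < (p %/ Ns).+1) (if (j <= k (p %/ Ns).+1)%N
     then c (p %/ Ns).+1 j * vget e ((p %/ Ns - j) * Ns + p %% Ns)%N else 0).
Proof.
move=> hp; set m0 := (p %/ Ns)%N; set a := (p %% Ns)%N.
have Ns0 : (0 < Ns)%N by rewrite lt0n; apply/eqP => h; move: hp; rewrite h muln0.
have ha : (a < Ns)%N by rewrite ltn_mod.
have hm0 : (m0 < Nt)%N by rewrite ltn_divLR.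
rewrite -[p]/(nat_of_ord (Ordinal hp)) vget_ord mxE.
pose F (q : nat) := (if [&& a == q %% Ns, (q %/ Ns).+1 <= m0.+1 & m0.+1 - (q %/ Ns).+1 <= k m0.+1]%N
   then c m0.+1 (m0.+1 - (q %/ Ns).+1)%N else 0) * vget e q.
have -> : \sum_j LMmat Ns Nt k c (Ordinal hp) j * e j 0 = \sum_(q < Nt * Ns) F q.
  by apply: eq_bigr => q _; rewrite mxE /F vget_ord.
rewrite sum_split.
have -> : \sum_(m < Nt) \sum_(b < Ns) F (m * Ns + b)%N =
   \sum_(m < Nt) (if (m <= m0)%N && (m0 - m <= k m0.+1)%N then c m0.+1 (m0 - m)%N * vget e (m * Ns + a)%N else 0).
  apply: eq_bigr => m _; rewrite (bigD1 (Ordinal ha)) //= big1 ?addr0.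
    rewrite /F; have [-> ->] := divmod_block m ha; rewrite eqxx /= ltnS subSS.
    by case: ifP => // _; rewrite mul0r.
  move=> b /eqP hb; rewrite /F; have [-> ->] := divmod_block m (ltn_ord b).
  case: eqP => [hab|]; last by rewrite mul0r.
  by case: hb; apply: val_inj; rewrite /= hab.
rewrite (bigID (fun m : 'I_Nt => (m < m0.+1)%N)) /= [X in _ + X]big1 ?addr0; last first.
  by move=> m hm; case: ifP => //; case/andP => h1 _; rewrite ltnS h1 in hm.
rewrite -(big_ord_widen _ (fun m => if (m <= m0)%N && (m0 - m <= k m0.+1)%N then c m0.+1 (m0 - m)%N * vget e (m * Ns + a)%N else 0) hm0).
rewrite (reindex_inj rev_ord_inj) /=; apply: eq_bigr => j _.
by have hj := ltn_ord j; rewrite subSS leq_subr subKn.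
Qed.
End B2.

Section B3.
Variable R : rcfType.

Definition Gf Ns Nt (f : 'cV[R]_Ns -> R -> 'cV[R]_Ns) (dt : R) x0 (w : 'cV[R]_(Nt * Ns)) : 'cV[R]_(Nt * Ns) :=
  \col_(p < Nt * Ns) vget (f (blk x0 w (p %/ Ns).+1) ((p %/ Ns).+1%:R * dt)) (p %% Ns).

Lemma idx_lt Ns Nt m a : (m < Nt)%N -> (a < Ns)%N -> (m * Ns + a < Nt * Ns)%N.
Proof. move=> h1 h2; nia. Qed.

Lemma blk_vget Ns Nt (x0 : 'cV[R]_Ns) (w : 'cV[R]_(Nt * Ns)) m a : (a < Ns)%N ->
  vget (blk x0 w m.+1) a = vget w (m * Ns + a).
Proof. move=> h; rewrite /blk /=. exact: (@vget_col R Ns (fun i => vget w (m * Ns + i)) a h). Qed.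

Lemma Gf_vget Ns Nt f dt (x0 : 'cV[R]_Ns) (w : 'cV[R]_(Nt * Ns)) m a :
  (m < Nt)%N -> (a < Ns)%N ->
  vget (Gf f dt x0 w) (m * Ns + a) = vget (f (blk x0 w m.+1) (m.+1%:R * dt)) a.
Proof.
move=> hm ha; rewrite /Gf (@vget_col R (Nt * Ns) (fun p => vget (f (blk x0 w (p %/ Ns).+1) ((p %/ Ns).+1%:R * dt)) (p %% Ns))) ?idx_lt //.
by have [-> ->] := divmod_block m ha.
Qed.

Lemma resid_diff Ns Nt f dt k (alpha beta : nat -> nat -> R) (x0 : 'cV[R]_Ns)
   (x w : 'cV[R]_(Nt * Ns)) m0 a :
  (m0 < Nt)%N -> (a < Ns)%N -> (k m0.+1 <= m0.+1)%N ->
  vget (resid f dt k alpha beta x0 x m0.+1) a - vget (resid f dt k alpha beta x0 w m0.+1) a =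
  \sum_(j < m0.+1) (if (j <= k m0.+1)%N then
     alpha m0.+1 j * vget (x - w) ((m0 - j) * Ns + a)%N
     - dt * beta m0.+1 j * vget (Gf f dt x0 x - Gf f dt x0 w) ((m0 - j) * Ns + a)%N else 0).
Proof.
move=> hm ha hk.
rewrite /resid !vget_sum -sumrB.
pose hh (y : 'cV[R]_(Nt * Ns)) (i : nat) := vget (alpha m0.+1 i *: blk x0 y (m0.+1 - i) -
   (dt * beta m0.+1 i) *: f (blk x0 y (m0.+1 - i)) ((m0.+1 - i)%:R * dt)) a.
pose h i := hh x i - hh w i.
transitivity (\sum_(i < (k m0.+1).+1) h i); first by [].
rewrite (big_ord_widen m0.+2 h) // big_mkcond big_ord_recr /=.
have -> : h m0.+1 = 0 by rewrite /h /hh subnn /= subrr.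
rewrite if_same addr0; apply: eq_bigr => j _.
have hj := ltn_ord j.
rewrite ltnS; case: ifP => // _.
have e1 : (m0.+1 - j = (m0 - j).+1)%N by rewrite subSn.
rewrite /h /hh e1 !vgetB !vgetZ !blk_vget // !Gf_vget //; last by apply: leq_ltn_trans (leq_subr _ _) hm.
  ring.
by apply: leq_ltn_trans (leq_subr _ _) hm.
Qed.

Lemma rbar_diff Ns Nt f dt k (alpha beta : nat -> nat -> R) (x0 : 'cV[R]_Ns)
   (x w : 'cV[R]_(Nt * Ns)) :
  (forall n, (1 <= n <= Nt)%N -> (k n <= n)%N) ->
  rbar f dt k alpha beta x0 x - rbar f dt k alpha beta x0 w =
  LMmat Ns Nt k alpha *m (x - w) - dt *: (LMmat Ns Nt k beta *m (Gf f dt x0 x - Gf f dt x0 w)).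
Proof.
move=> hk; apply/colP => p.
have hp := ltn_ord p.
have Ns0 : (0 < Ns)%N.
  case: (posnP Ns) => // h0; exfalso; move: (ltn_ord p); move: (nat_of_ord p) => q.
  by rewrite h0 muln0.
have ha : (p %% Ns < Ns)%N by rewrite ltn_mod.
have hm0 : (p %/ Ns < Nt)%N by rewrite ltn_divLR.
have hk' : (k (p %/ Ns).+1 <= (p %/ Ns).+1)%N by apply: hk.
have rE y : rbar f dt k alpha beta x0 y p 0 = vget (resid f dt k alpha beta x0 y (p %/ Ns).+1) (p %% Ns) by rewrite mxE.
rewrite [LHS]mxE [X in _ + X]mxE !rE.
have nE (M : 'cV[R]_(Nt * Ns)) : (- (dt *: M)) p 0 = - (dt * M p 0) by rewrite !mxE.
rewrite resid_diff // [RHS]mxE nE.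
rewrite -!vget_ord !LM_vget // mulr_sumr -sumrB; apply: eq_bigr => j _.
by case: ifP => _; [ring | rewrite mulr0 subr0].
Qed.

Lemma norm2_vget m (u : 'cV[R]_m) : norm2 u = Num.sqrt (\sum_(i < m) vget u i ^+ 2).
Proof. by rewrite /norm2; congr Num.sqrt; apply: eq_bigr => i _; rewrite vget_ord. Qed.

Lemma Gf_lip Ns Nt f (dt T Lf : R) (x0 : 'cV[R]_Ns) (x w : 'cV[R]_(Nt * Ns)) :
  (0 < Nt)%N -> 0 < T -> dt = T / Nt%:R -> 0 <= Lf ->
  (forall w y t, 0 <= t <= T -> norm2 (f w t - f y t) <= Lf * norm2 (w - y)) ->
  norm2 (Gf f dt x0 x - Gf f dt x0 w) <= Lf * norm2 (x - w).
Proof.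
move=> Nt0 T0 dtE Lf0 Hlip.
rewrite !norm2_vget (sum_split (fun p => vget (Gf f dt x0 x - Gf f dt x0 w) p ^+ 2)) (sum_split (fun p => vget (x - w) p ^+ 2)) -(ger0_norm Lf0) -sqrtr_sqr -sqrtrM ?sqr_ge0 //.
rewrite ler_sqrt; last by rewrite mulr_ge0 ?sqr_ge0 // sumr_ge0 // => i _; rewrite sumr_ge0 // => j _; rewrite sqr_ge0.
rewrite mulr_sumr; apply: ler_sum => m _.
have hm := ltn_ord m.
set bx := blk x0 x m.+1; set bw := blk x0 w m.+1.
set t := (m.+1%:R * dt).
have e1 : \sum_(b < Ns) vget (Gf f dt x0 x - Gf f dt x0 w) (m * Ns + b) ^+ 2 = norm2 (f bx t - f bw t) ^+ 2.
  rewrite norm2_vget sqr_sqrtr; last by rewrite sumr_ge0 // => i _; rewrite sqr_ge0.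
  by apply: eq_bigr => b _; rewrite vgetB !Gf_vget // vgetB.
have e2 : \sum_(b < Ns) vget (x - w) (m * Ns + b) ^+ 2 = norm2 (bx - bw) ^+ 2.
  rewrite norm2_vget sqr_sqrtr; last by rewrite sumr_ge0 // => i _; rewrite sqr_ge0.
  by apply: eq_bigr => b _; rewrite !vgetB !blk_vget.
rewrite e1 e2 -exprMn ler_pXn2r ?nnegrE ?mulr_ge0 ?norm2_ge0 //.
apply: Hlip; rewrite /t dtE; apply/andP; split.
  by rewrite mulr_ge0 // divr_ge0 // ltW.
rewrite mulrA ler_pdivrMr ?ltr0n // mulrC ler_pM2l // ler_nat. all: try exact: hm. all: by rewrite /norm2 sqrtr_ge0.
Qed.
End B3.

Section Spec.
Local Open Scope sesquilinear_scope.
Variable R : rcfType.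
Local Notation fC := (real_complex R).

Lemma fC_real (x : R) : fC x \is Num.real.
Proof. by rewrite complex_real. Qed.

Lemma quad_decomp n (S : 'M[R]_n) : S^T = S ->
 exists d : 'I_n -> R, (forall i, eigenvalue S (d i)) /\
 forall v : 'cV[R]_n, exists c : 'I_n -> R, (forall i, 0 <= c i) /\
   (v^T *m v) 0 0 = \sum_i c i /\ (v^T *m S *m v) 0 0 = \sum_i d i * c i.
Proof.
move=> Ssym.
set S' := map_mx fC S.
have Sreal : S' \is a realmx by apply/mxOverP => i j; rewrite mxE fC_real.
have Ssym' : S' \is symmetricmx.
  rewrite is_hermitianmxE /= expr0 scale1r.
  by apply/eqP/matrixP => i j; rewrite !mxE -[in LHS]Ssym mxE.
have Sh : S' \is hermsymmx := realsym_hermsym Ssym' Sreal.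
have /orthomx_spectralP SE := hermitian_normalmx Sh.
have Pu := spectral_unitarymx S'.
have Dr := hermitian_spectral_diag_real Sh.
move: SE Pu Dr; set P := spectralmx S'; set D := spectral_diag S' => SE Pu Dr.
have Punit := unitarymx_unit Pu.
have PP1 : P *m P^t* = 1%:M by apply/unitarymxP.
have P1P : P^t* *m P = 1%:M by apply: mulmx1C.
have PS : P *m S' = diag_mx D *m P.
  by rewrite {1}SE !mulmxA mulmxV // mul1mx.
have Dreal i : D 0 i = fC (complex.Re (D 0 i)).
  by rewrite RRe_real //; move/mxOverP: Dr; apply.
exists (fun i => complex.Re (D 0 i)); split.
  move=> i; rewrite eigenvalue_root_char -(fmorph_root fC) map_char_poly.
  set t := (X in root _ X). have -> : t = D 0 i by rewrite /t; symmetry; exact: Dreal.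
  rewrite -eigenvalue_root_char.
  apply/eigenvalueP; exists (row i P).
    by rewrite -row_mul PS mul_diag_mx; apply/rowP => j; rewrite !mxE.
  apply/negP => /eqP H0; have := congr1 (row i) PP1.
  rewrite row_mul H0 mul0mx => /rowP /(_ i); rewrite !mxE eqxx /= => /eqP.
  by rewrite eq_sym oner_eq0.
move=> v; set v' := map_mx fC v; set w := P *m v'.
have v'r : v'^t* = v'^T.
  by apply/matrixP => i j; rewrite !mxE conj_Creal // fC_real.
pose c i := complex.Re (`|w i 0| ^+ 2).
have cE i : fC (c i) = `|w i 0| ^+ 2.
  by rewrite /c RRe_real // ger0_real // exprn_ge0.
exists c; split.
  by move=> i; rewrite -ler0c; have -> := cE i; rewrite exprn_ge0.
have wE : v'^T = w^t* *m P.
  by rewrite -v'r /w trmx_mul map_mxM -mulmxA P1P mulmx1.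
split.
  apply: complexI.
  have -> : fC ((v^T *m v) 0 0) = (v'^T *m v') 0 0.
    by rewrite /v' map_trmx -map_mxM [in RHS]mxE.
  rewrite wE -mulmxA -/w mxE rmorph_sum /=; apply: eq_bigr => j _.
  by rewrite cE normCKC !mxE.
apply: complexI.
have -> : fC ((v^T *m S *m v) 0 0) = (v'^T *m S' *m v') 0 0.
  by rewrite /v' /S' map_trmx -!map_mxM [in RHS]mxE.
rewrite wE SE invmx_unitary // !mulmxA -(mulmxA (w^t*) P) PP1 mulmx1 -mulmxA -/w.
rewrite mxE rmorph_sum /=; apply: eq_bigr => j _.
have h : fC (complex.Re (D 0 j) * c j) = fC (complex.Re (D 0 j)) * fC (c j) by exact: rmorphM.
by rewrite mul_mx_diag mxE h cE -Dreal normCKC !mxE mulrA [_ * D 0 j]mulrC.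
Qed.

Definition dot m (u v : 'cV[R]_m) := \sum_i u i 0 * v i 0.

Lemma dot_ge0 m (u : 'cV[R]_m) : 0 <= dot u u.
Proof. by apply: sumr_ge0 => i _; rewrite -expr2 sqr_ge0. Qed.

Lemma norm2E m (u : 'cV[R]_m) : norm2 u = Num.sqrt (dot u u).
Proof. by rewrite /norm2 /dot; congr Num.sqrt; apply: eq_bigr => i _; rewrite expr2. Qed.

Lemma norm2_ge0 m (u : 'cV[R]_m) : 0 <= norm2 u.
Proof. by rewrite norm2E sqrtr_ge0. Qed.

Lemma norm2_sq m (u : 'cV[R]_m) : norm2 u ^+ 2 = dot u u.
Proof. by rewrite norm2E sqr_sqrtr // dot_ge0. Qed.

Lemma dotC m (u v : 'cV[R]_m) : dot u v = dot v u.
Proof. by apply: eq_bigr => i _; rewrite mulrC. Qed.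

Lemma dotDl m (u v w : 'cV[R]_m) : dot (u + v) w = dot u w + dot v w.
Proof. by rewrite /dot -big_split; apply: eq_bigr => i _; rewrite mxE mulrDl. Qed.

Lemma dotZl m a (u w : 'cV[R]_m) : dot (a *: u) w = a * dot u w.
Proof. by rewrite /dot mulr_sumr; apply: eq_bigr => i _; rewrite mxE mulrA. Qed.

Lemma dot_trmx m (u v : 'cV[R]_m) : (u^T *m v) 0 0 = dot u v.
Proof. by rewrite mxE; apply: eq_bigr => i _; rewrite mxE. Qed.

Lemma CS m (u v : 'cV[R]_m) : dot u v ^+ 2 <= dot u u * dot v v.
Proof.
pose a i := u i 0; pose b i := v i 0.
have E : \sum_i \sum_j (a i * b j - a j * b i) ^+ 2 =
         2%:R * (dot u u * dot v v - dot u v ^+ 2).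
  have E1 : dot u u * dot v v = \sum_i \sum_j (a i * a i) * (b j * b j).
    by rewrite /dot mulr_suml; apply: eq_bigr => i _; rewrite mulr_sumr.
  have E2 : dot u v ^+ 2 = \sum_i \sum_j (a i * b i) * (a j * b j).
    by rewrite expr2 /dot mulr_suml; apply: eq_bigr => i _; rewrite mulr_sumr.
  have E3 : \sum_i \sum_j (a i * a i) * (b j * b j) =
            \sum_i \sum_j (a j * a j) * (b i * b i).
    by rewrite exchange_big.
  have E4 : \sum_i \sum_j (a i * b j - a j * b i) ^+ 2 =
     \sum_i \sum_j (a i * a i) * (b j * b j) + \sum_i \sum_j (a j * a j) * (b i * b i)
     - 2%:R * \sum_i \sum_j (a i * b i) * (a j * b j).
    rewrite -big_split /= mulr_sumr -sumrB; apply: eq_bigr => i _.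
    rewrite -big_split /= mulr_sumr -sumrB; apply: eq_bigr => j _.
    ring.
  rewrite E4 -E3 -E1 -E2; ring.
have : 0 <= \sum_i \sum_j (a i * b j - a j * b i) ^+ 2.
  by apply: sumr_ge0 => i _; apply: sumr_ge0 => j _; apply: sqr_ge0.
rewrite E pmulr_rge0 ?ltr0n // subr_ge0 //.
Qed.

Lemma dot_le m (u v : 'cV[R]_m) : dot u v <= norm2 u * norm2 v.
Proof.
have h0 : 0 <= norm2 u * norm2 v by rewrite mulr_ge0 ?norm2_ge0.
have [le0|lt0] := lerP (dot u v) 0; first exact: le_trans le0 h0.
rewrite -(ler_pXn2r (_ : 0 < 2)%N) ?nnegrE ?(ltW lt0) //.
by rewrite exprMn !norm2_sq CS.
Qed.

Lemma norm2D m (u v : 'cV[R]_m) : norm2 (u + v) <= norm2 u + norm2 v.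
Proof.
rewrite -(ler_pXn2r (_ : 0 < 2)%N) ?nnegrE ?addr_ge0 ?norm2_ge0 //.
rewrite norm2_sq !dotDl ![dot _ (u + v)]dotC !dotDl sqrrD !norm2_sq.
have := dot_le u v; rewrite [dot v u]dotC; lra.
Qed.

Lemma norm2Z m a (u : 'cV[R]_m) : norm2 (a *: u) = `|a| * norm2 u.
Proof.
rewrite !norm2E dotZl dotC dotZl mulrA -expr2 sqrtrM ?sqr_ge0 //.
by rewrite sqrtr_sqr.
Qed.

Lemma norm2N m (u : 'cV[R]_m) : norm2 (- u) = norm2 u.
Proof. by rewrite -scaleN1r norm2Z normrN normr1 mul1r. Qed.

Lemma norm2B m (u v : 'cV[R]_m) : norm2 (u - v) = norm2 (v - u).
Proof. by rewrite -norm2N opprB. Qed.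

Lemma norm2_lb m (u v : 'cV[R]_m) : norm2 u - norm2 v <= norm2 (u - v).
Proof.
have := norm2D (u - v) v; rewrite subrK; lra.
Qed.

Lemma dot_mul m n (M : 'M[R]_(m, n)) v :
  dot (M *m v) (M *m v) = (v^T *m (M^T *m M) *m v) 0 0.
Proof. by rewrite -dot_trmx trmx_mul !mulmxA. Qed.

Lemma MtM_sym m n (M : 'M[R]_(m, n)) : (M^T *m M)^T = M^T *m M.
Proof. by rewrite trmx_mul trmxK. Qed.

Lemma sig_max m n (M : 'M[R]_(m, n)) s v :
  is_sigma_max M s -> norm2 (M *m v) <= s * norm2 v.
Proof.
move=> [s0 [_ Hs]].
have [d [dE Hv]] := quad_decomp (MtM_sym M).
have [c [c0 [e1 e2]]] := Hv v.
have H : dot (M *m v) (M *m v) <= s ^+ 2 * dot v v.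
  rewrite dot_mul e2 -dot_trmx e1 mulr_sumr; apply: ler_sum => i _.
  by rewrite ler_wpM2r // Hs.
rewrite !norm2E -(ger0_norm s0) -sqrtr_sqr -sqrtrM ?sqr_ge0 //.
by rewrite ler_sqrt // mulr_ge0 ?sqr_ge0 ?dot_ge0.
Qed.

Lemma sig_min n (M : 'M[R]_n) s v :
  is_sigma_min M s -> s * norm2 v <= norm2 (M *m v).
Proof.
move=> [s0 [_ Hs]].
have [d [dE Hv]] := quad_decomp (MtM_sym M).
have [c [c0 [e1 e2]]] := Hv v.
have H : s ^+ 2 * dot v v <= dot (M *m v) (M *m v).
  rewrite dot_mul e2 -dot_trmx e1 mulr_sumr; apply: ler_sum => i _.
  by rewrite ler_wpM2r // Hs.
rewrite !norm2E -(ger0_norm s0) -sqrtr_sqr -sqrtrM ?sqr_ge0 //.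
by rewrite ler_sqrt // dot_ge0.
Qed.
End Spec.

Theorem mainTheorem3 (R : rcfType) (Ns Nt nst zb : nat)
  (T dt : R) (f : 'cV[R]_Ns -> R -> 'cV[R]_Ns) (x0 : 'cV[R]_Ns)
  (k : nat -> nat) (alpha beta : nat -> nat -> R)
  (Pi : 'M[R]_(Nt * Ns, nst)) (Abar : 'M[R]_(zb, Nt * Ns))
  (Lf P sA sB sAA sAB : R) (x xt wst : 'cV[R]_(Nt * Ns)) :
  (0 < Ns)%N -> (0 < Nt)%N -> 0 < T -> dt = T / Nt%:R ->
  (forall n, (1 <= n <= Nt)%N -> (k n <= n)%N /\ alpha n 0%N != 0) ->
  (* singular values *)
  is_sigma_min (LMmat Ns Nt k alpha) sA ->
  is_sigma_max (LMmat Ns Nt k beta) sB ->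
  is_sigma_max (Abar *m LMmat Ns Nt k alpha) sAA ->
  is_sigma_max (Abar *m LMmat Ns Nt k beta) sAB ->
  (* (i) Lipschitz continuity *)
  0 < Lf ->
  (forall w y t, 0 <= t <= T -> norm2 (f w t - f y t) <= Lf * norm2 (w - y)) ->
  (* (ii) time-step restriction: dt < sA / (Lf sB) *)
  dt * Lf * sB < sA ->
  (* (iii) *)
  0 < P ->
  (forall w, inS x0 Pi w ->
     P * norm2 (rbar f dt k alpha beta x0 w) <= norm2 (Abar *m rbar f dt k alpha beta x0 w)) ->
  (* full-order solution *)
  rbar f dt k alpha beta x0 x = 0 ->
  (* ST-LSPG solution *)
  inS x0 Pi xt ->
  (forall w, inS x0 Pi w ->
     norm2 (Abar *m rbar f dt k alpha beta x0 xt) <= norm2 (Abar *m rbar f dt k alpha beta x0 w)) ->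
  (* best approximation of x in S, realizing min_{w in S} ||x - w|| *)
  inS x0 Pi wst ->
  (forall w, inS x0 Pi w -> norm2 (x - wst) <= norm2 (x - w)) ->
  norm2 (x - xt) <=
    P^-1 * ((sAA + dt * Lf * sAB) / (sA - dt * Lf * sB)) * norm2 (x - wst).
Proof.
move=> Ns0 Nt0 T0 dtE hkal hA hB hAA hAB Lf0 Hlip hdt P0 HP hx hxt Hmin hwst Hbest.
have hk n : (1 <= n <= Nt)%N -> (k n <= n)%N by move=> h; case: (hkal n h).
have dt0 : 0 <= dt by rewrite dtE divr_ge0 // ltW.
have sB0 : 0 <= sB by case: hB.
have sAB0 : 0 <= sAB by case: hAB.
have Lf0' := ltW Lf0.
set Aa := LMmat Ns Nt k alpha; set Bb := LMmat Ns Nt k beta.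
have rD y : rbar f dt k alpha beta x0 x - rbar f dt k alpha beta x0 y = Aa *m (x - y) - dt *: (Bb *m (Gf f dt x0 x - Gf f dt x0 y)).
  exact: rbar_diff.
have glip y : norm2 (Gf f dt x0 x - Gf f dt x0 y) <= Lf * norm2 (x - y).
  exact: (Gf_lip _ _ _ Nt0 T0 dtE Lf0' Hlip).
have low : (sA - dt * Lf * sB) * norm2 (x - xt) <= norm2 (rbar f dt k alpha beta x0 xt).
  have -> : norm2 (rbar f dt k alpha beta x0 xt) = norm2 (rbar f dt k alpha beta x0 x - rbar f dt k alpha beta x0 xt) by rewrite hx sub0r norm2N.
  rewrite rD; apply: le_trans (norm2_lb _ _).
  rewrite norm2Z ger0_norm //.
  have h1 := sig_min (x - xt) hA.
  have h2 := sig_max (Gf f dt x0 x - Gf f dt x0 xt) hB.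
  have h3 : sB * norm2 (Gf f dt x0 x - Gf f dt x0 xt) <= sB * (Lf * norm2 (x - xt)).
    by rewrite ler_wpM2l.
  have h4 : dt * norm2 (Bb *m (Gf f dt x0 x - Gf f dt x0 xt)) <= dt * (sB * (Lf * norm2 (x - xt))).
    by rewrite ler_wpM2l //; apply: le_trans h2 h3.
  rewrite -/Aa in h1; lra.
have up : norm2 (Abar *m rbar f dt k alpha beta x0 wst) <= (sAA + dt * Lf * sAB) * norm2 (x - wst).
  have -> : norm2 (Abar *m rbar f dt k alpha beta x0 wst) = norm2 (Abar *m (rbar f dt k alpha beta x0 x - rbar f dt k alpha beta x0 wst)).
    by rewrite hx sub0r mulmxN norm2N.
  rewrite rD mulmxBr -scalemxAr !mulmxA; apply: le_trans (norm2D _ _) _.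
  rewrite norm2N norm2Z ger0_norm //.
  have h1 := sig_max (x - wst) hAA.
  have h2 := sig_max (Gf f dt x0 x - Gf f dt x0 wst) hAB.
  have h3 : sAB * norm2 (Gf f dt x0 x - Gf f dt x0 wst) <= sAB * (Lf * norm2 (x - wst)).
    by rewrite ler_wpM2l.
  have h4 : dt * norm2 (Abar *m Bb *m (Gf f dt x0 x - Gf f dt x0 wst)) <= dt * (sAB * (Lf * norm2 (x - wst))).
    by rewrite ler_wpM2l //; apply: le_trans h2 h3.
  rewrite -/Aa in h1; lra.
have a0 : 0 < sA - dt * Lf * sB by rewrite subr_gt0.
have chain : P * ((sA - dt * Lf * sB) * norm2 (x - xt)) <= (sAA + dt * Lf * sAB) * norm2 (x - wst).
  apply: le_trans (ler_wpM2l (ltW P0) low) _.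
  apply: le_trans (HP _ hxt) _.
  by apply: le_trans (Hmin _ hwst) up.
have Pa : 0 < P * (sA - dt * Lf * sB) by rewrite mulr_gt0.
have -> : P^-1 * ((sAA + dt * Lf * sAB) / (sA - dt * Lf * sB)) * norm2 (x - wst) =
   ((sAA + dt * Lf * sAB) * norm2 (x - wst)) / (P * (sA - dt * Lf * sB)).
  by field; apply/andP; split; rewrite gt_eqF.
rewrite ler_pdivlMr //; lra.
Qed.
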